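(* For every type $\tau\in\mathbb{T}_C$, $|\bigcap\mathbb{P}(\tau)|\le|\tau|^2$, where $|\cdot|$ denotes the number of nodes in the syntax tree of a type.
   Context: Types $\mathbb{T}_C\ni\tau ::= a\mid\alpha\mid\omega\mid\tau_1\to\tau_2\mid\tau_1\cap\tau_2\mid c(\tau)$ ($a$ constants, $\alpha$ type variables, $c$ unary constructors). Paths: $\pi ::= a\mid\alpha\mid\sigma\to\pi\mid c(\omega)\mid c(\pi)$. $\mathbb{P}(a)=\{a\}$, $\mathbb{P}(\alpha)=\{\alpha\}$, $\mathbb{P}(\omega)=\emptyset$, $\mathbb{P}(\sigma\to\tau)=\{\sigma\to\pi\mid\pi\in\mathbb{P}(\tau)\}$, $\mathbb{P}(\sigma\cap\tau)=\mathbb{P}(\sigma)\cup\mathbb{P}(\tau)$, $\mathbb{P}(c(\tau))=\{c(\omega)\}$ if $\mathbb{P}(\tau)=\emptyset$, else $\{c(\pi)\mid\pi\in\mathbb{P}(\tau)\}$. $\bigcap\mathbb{P}(\tau)$ denotes the type $\pi_1\cap\cdots\cap\pi_n$ where $\mathbb{P}(\tau)=\{\pi_1,\ldots,\pi_n\}$, and $\omega$ if $\mathbb{P}(\tau)=\emptyset$. *)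

(* Defs.v *)
From Stdlib Require Import List Arith.
Import ListNotations.

Inductive ty : Type :=
| TConst : nat -> ty
| TVar   : nat -> ty
| TOmega : ty
| TArrow : ty -> ty -> ty
| TInter : ty -> ty -> ty
| TCons  : nat -> ty -> ty.

Definition ty_eq_dec : forall s t : ty, {s = t} + {s <> t}.
Proof. decide equality; apply Nat.eq_dec. Defined.

Fixpoint tsize (t : ty) : nat :=
  match t with
  | TConst _ | TVar _ | TOmega => 1
  | TArrow s u => 1 + tsize s + tsize u
  | TInter s u => 1 + tsize s + tsize u
  | TCons _ s => 1 + tsize s
  end.

(* P(tau), computed as a list (possibly with repetitions) *)
Fixpoint paths_list (t : ty) : list ty :=
  match t with
  | TConst a => [TConst a]
  | TVar x => [TVar x]
  | TOmega => []
  | TArrow s u => map (TArrow s) (paths_list u)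
  | TInter s u => paths_list s ++ paths_list u
  | TCons c s =>
      match paths_list s with
      | [] => [TCons c TOmega]
      | l => map (TCons c) l
      end
  end.

Definition paths (t : ty) : list ty := nodup ty_eq_dec (paths_list t).

Fixpoint bigcap (l : list ty) : ty :=
  match l with
  | [] => TOmega
  | [p] => p
  | p :: l' => TInter p (bigcap l')
  end.

Definition bigcap_paths (t : ty) : ty := bigcap (paths t).

(* Main.v *)
Require Import Defs.
From Stdlib Require Import List Arith Lia.
Import ListNotations.

Lemma bigcap_bound : forall l n, l <> [] -> Forall (fun p => tsize p <= n) l ->
  tsize (bigcap l) + 1 <= length l * (n+1).
Proof.
  induction l as [|a l IH]; intros n Hne HF; [congruence|].
  inversion HF; subst.
  destruct l as [|b l'].
  - simpl. lia.
  - assert (H := IH n ltac:(discriminate) H2).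
    change (tsize (TInter a (bigcap (b :: l'))) + 1 <= length (a :: b :: l') * (n + 1)).
    simpl in *. lia.
Qed.

Lemma tsize_pos : forall t, 1 <= tsize t.
Proof. destruct t; simpl; lia. Qed.

Lemma paths_size : forall t, Forall (fun p => tsize p <= tsize t) (paths_list t)
  /\ 2 * length (paths_list t) <= tsize t + 1.
Proof.
  induction t; simpl.
  - split; [repeat constructor; simpl; lia | simpl; lia].
  - split; [repeat constructor; simpl; lia | simpl; lia].
  - split; [constructor | lia].
  - destruct IHt2 as [F2 L2]. split.
    + rewrite Forall_map. rewrite Forall_forall in *. intros p Hp; simpl; specialize (F2 p Hp); lia.
    + rewrite length_map. lia.
  - destruct IHt1 as [F1 L1], IHt2 as [F2 L2]. split.
    + rewrite Forall_forall in *. intros p Hp; apply in_app_or in Hp as [Hp|Hp]; [specialize (F1 p Hp)|specialize (F2 p Hp)]; lia.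
    + rewrite length_app. lia.
  - destruct IHt as [F L]. destruct (paths_list t) as [|q l] eqn:E.
    + split; [constructor; [simpl; pose proof (tsize_pos t); lia | constructor] | simpl; lia].
    + change (TCons n q :: map (TCons n) l) with (map (TCons n) (q :: l)).
      split.
      * rewrite Forall_map. rewrite Forall_forall in *. intros p Hp; simpl; specialize (F p Hp); lia.
      * rewrite length_map. simpl in L |- *. lia.
Qed.


Theorem lemma4p9 : forall t : ty, tsize (bigcap_paths t) <= tsize t * tsize t.
Proof.
  intro t. unfold bigcap_paths, paths.
  destruct (paths_size t) as [F L].
  pose proof (tsize_pos t).
  set (l := nodup ty_eq_dec (paths_list t)).
  assert (Hlen : length l <= length (paths_list t)).
  { apply NoDup_incl_length; [apply NoDup_nodup|].
    intros x Hx; apply nodup_In in Hx; exact Hx. }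
  assert (Hf : Forall (fun p => tsize p <= tsize t) l).
  { apply Forall_forall; intros x Hx. unfold l in Hx; apply nodup_In in Hx.
    rewrite Forall_forall in F; auto. }
  destruct l as [|a l'] eqn:E.
  - simpl. nia.
  - assert (B := bigcap_bound (a :: l') (tsize t) ltac:(discriminate) Hf).
    rewrite <- E in *. nia.
Qed.
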